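(* Let $\mathcal{G}_1,\mathcal{G}_2,\ldots$ be classes of functions from $S$ to $[0,1]$ and $K>0$ a constant such that for every $j$ there exists $M_j\ge 1$ with, for all $n\ge1$ and all $0<\epsilon<1$, \[ P\Big\{\sup_{g\in\mathcal{G}_j}|L(g)-\widehat{L}_n(g)|>\epsilon\Big\}\le K\,2^j\sqrt{j}^{\,j}\Big(\frac{M_j}{\epsilon}\Big)^j\exp(-n\epsilon^2/128). \] Define the complexity penalty $r(n,j)=\sqrt{\dfrac{128\,j\log(2j^{1/2}M_j n)}{n}}$. Let the random pair $(X,Y)$ be such that $\inf_j\inf_{g\in\mathcal{G}_j}L(g)=L^*$. Then the estimator $g^*_n$ based on Structural Risk Minimization (with this penalty) is strongly consistent, i.e. $L(g^*_n)\to L^*$ almost surely.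
   Context: $S\subset\mathbb{R}^d$. $(X,Y)$ is a random pair with values in $S\times[0,1]$ and $(X_1,Y_1),\ldots,(X_n,Y_n)$ is an i.i.d. sample from its distribution. For $g:S\to[0,1]$, $L(g)=E[(g(X)-Y)^2]$ (conditional on the sample for data-dependent $g$) and $\widehat{L}_n(g)=\frac1n\sum_{i=1}^n(g(X_i)-Y_i)^2$. $L^*$ is the infimum of $L(g)$ over all measurable $g$. For each $j$, $\hat g_{n,j}$ minimizes $\widehat{L}_n$ over $\mathcal{G}_j$ (assumed to exist); $\widetilde{L}_{n,j}=\widehat{L}_n(\hat g_{n,j})+r(n,j)$; $g^*_n$ is a function among the $\hat g_{n,j}$ minimizing $\widetilde{L}_{n,j}$ over $j$. Suprema over function classes are assumed measurable. *)

(* Defs.v *)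
From HB Require Import structures.
From mathcomp Require Import all_boot all_order all_algebra.
From mathcomp Require Import all_classical all_reals all_analysis.
Set Implicit Arguments. Unset Strict Implicit. Unset Printing Implicit Defensive.
Import Order.TTheory GRing.Theory Num.Theory.
Import numFieldNormedType.Exports.
Local Open Scope classical_set_scope.
Local Open Scope ring_scope.

Section SRM.
Context {R : realType} {d : measure_display} {Omega : measurableType d}
        {dT : measure_display} {T : measurableType dT}.

Definition risk (P : probability Omega R) (X : Omega -> T) (Y : Omega -> R)
  (g : T -> R) : R :=
  fine (\int[P]_w ((g (X w) - Y w) ^+ 2)%:E).

Definition emp_risk (Xs : nat -> Omega -> T) (Ys : nat -> Omega -> R)
  (n : nat) (g : T -> R) (w : Omega) : R :=
  n%:R^-1 * \sum_(i < n) (g (Xs i w) - Ys i w) ^+ 2.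

Definition bayes_risk (P : probability Omega R) (X : Omega -> T) (Y : Omega -> R) : R :=
  inf [set risk P X Y g | g in
        [set g : T -> R | measurable_fun setT g /\ forall x, 0 <= g x <= 1]].

Definition penalty (M : nat -> R) (n j : nat) : R :=
  Num.sqrt (128 * j%:R * ln (2 * Num.sqrt j%:R * M j * n%:R) / n%:R).

Definition iid_sample (P : probability Omega R) (X : Omega -> T) (Y : Omega -> R)
  (Xs : nat -> Omega -> T) (Ys : nat -> Omega -> R) : Prop :=
  [/\ forall i, measurable_fun setT (fun w => (Xs i w, Ys i w)),
      forall i (B : set (T * R)), measurable B ->
        P ((fun w => (Xs i w, Ys i w)) @^-1` B) = P ((fun w => (X w, Y w)) @^-1` B)
    & forall (s : seq nat) (B : nat -> set (T * R)), uniq s ->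
        (forall i, measurable (B i)) ->
        P (\bigcap_(i in [set` s]) ((fun w => (Xs i w, Ys i w)) @^-1` B i)) =
        (\prod_(i <- s) P ((fun w => (Xs i w, Ys i w)) @^-1` B i))%E].

End SRM.

(* Main.v *)
Require Import Defs.
From HB Require Import structures.
From mathcomp Require Import all_boot all_order all_algebra.
From mathcomp Require Import all_classical all_reals all_analysis.
From mathcomp Require Import measurable_realfun.
From mathcomp Require Import ring lra.
Import Order.TTheory GRing.Theory Num.Theory.
Import numFieldNormedType.Exports.
Local Open Scope classical_set_scope.
Local Open Scope ring_scope.

Lemma pen_small (R : realType) (M : nat -> R) (j : nat) (eps : R) :
  (0 < j)%N -> 1 <= M j -> 0 < eps ->
  exists N : nat, forall n : nat, (N <= n)%N -> penalty M n j <= eps.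
Proof.
move=> j0 M1 e0.
set c := 2 * Num.sqrt (j%:R : R) * M j.
have s1 : 1 <= Num.sqrt (j%:R : R).
  by rewrite -{1}sqrtr1 ler_sqrt // ler1n.
have c1 : 1 <= c by rewrite /c; nra.
set B := 256 * j%:R * Num.sqrt c / eps ^+ 2.
have B0 : 0 <= B by rewrite /B divr_ge0 ?mulr_ge0 ?sqrtr_ge0 //; lra.
set m := Num.Def.archi_bound B.
have Bm : B < m%:R := archi_boundP B0.
exists (m * m).+1 => n hn.
have n0 : (0 < n)%N by case: n hn.
have nR : (0 : R) < n%:R by rewrite ltr0n.
set sn := Num.sqrt (n%:R : R).
have sn0 : 0 < sn by rewrite /sn sqrtr_gt0.
have snsq : sn ^+ 2 = n%:R by rewrite /sn sqr_sqrtr // ltW.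
have msn : m%:R <= sn.
  rewrite /sn -(@ger0_norm _ (m%:R : R)) // -sqrtr_sqr ler_sqrt //.
  by rewrite -natrX ler_nat expnS expn1 ltnW.
set t := Num.sqrt (c * n%:R).
have t0 : 0 < t by rewrite /t sqrtr_gt0 mulr_gt0 //; lra.
have tE : t = Num.sqrt c * sn by rewrite /t sqrtrM //; lra.
have lnE : ln (c * n%:R) <= 2 * t.
  have -> : c * n%:R = t ^+ 2 by rewrite /t sqr_sqrtr // mulr_ge0 //; lra.
  rewrite lnXn // mulr2n.
  have := ln_sublinear t0; lra.
have sc0 : 0 <= Num.sqrt c := sqrtr_ge0 _.
have hB : 256 * j%:R * Num.sqrt c <= eps ^+ 2 * sn.
  have e2 : 0 < eps ^+ 2 by rewrite exprn_gt0.
  have : B <= sn by lra.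
  by rewrite /B ler_pdivrMr // [eps ^+ 2 * _]mulrC.
have eE : eps = Num.sqrt (eps ^+ 2) by rewrite sqrtr_sqr ger0_norm // ltW.
rewrite /penalty [X in _ <= X]eE ler_sqrt; last by rewrite sqr_ge0.
rewrite ler_pdivrMr //.
have j0' : (0 : R) <= j%:R by [].
have L1 : 128 * j%:R * ln (c * n%:R) <= 128 * j%:R * (2 * t).
  by apply: ler_wpM2l => //; rewrite mulr_ge0.
apply: (le_trans L1).
rewrite -snsq tE.
have : 256 * j%:R * Num.sqrt c * sn <= eps ^+ 2 * sn * sn.
  by apply: ler_wpM2r => //; lra.
move=> h; apply: (le_trans _ (le_trans h _)).
  by rewrite le_eqVlt; apply/orP; left; apply/eqP; ring.
by rewrite le_eqVlt; apply/orP; left; apply/eqP; ring.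
Qed.
Lemma risk_ge0 (R : realType) d (Omega : measurableType d) dT (T : measurableType dT)
  (P : probability Omega R) (X : Omega -> T) (Y : Omega -> R) (g : T -> R) :
  0 <= risk P X Y g.
Proof.
rewrite /risk; apply: fine_ge0; apply: integral_ge0 => w _.
by rewrite lee_fin sqr_ge0.
Qed.

Lemma risk_le1 (R : realType) d (Omega : measurableType d) dT (T : measurableType dT)
  (P : probability Omega R) (X : Omega -> T) (Y : Omega -> R) (g : T -> R) :
  measurable_fun setT (fun w => (X w, Y w)) -> (forall w, 0 <= Y w <= 1) ->
  measurable_fun setT g -> (forall x, 0 <= g x <= 1) ->
  risk P X Y g <= 1.
Proof.
move=> mXY Y01 mg g01.
have mX : measurable_fun setT X.
  by have := measurableT_comp (@measurable_fst _ _ T R) mXY.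
have mY : measurable_fun setT Y.
  by have := measurableT_comp (@measurable_snd _ _ T R) mXY.
have mh : measurable_fun setT (fun w => ((g (X w) - Y w) ^+ 2)%:E).
  have mh0 : measurable_fun setT (fun w => (g (X w) - Y w) ^+ 2).
    apply: measurable_funX; apply: measurable_funB => //.
    exact: measurableT_comp.
  exact: (proj2 (measurable_EFinP _ _) mh0).
have I1 : (\int[P]_w ((g (X w) - Y w) ^+ 2)%:E <= 1)%E.
  apply: (@le_trans _ _ (\int[P]_w (cst 1%:E) w)%E).
    apply: ge0_le_integral => //.
    - by move=> w _; rewrite lee_fin sqr_ge0.
    - move=> w _; rewrite lee_fin.
      have := Y01 w; have := g01 (X w); nra.
  by rewrite integral_cst //= probability_setT mul1e.
have I0 : (0 <= \int[P]_w ((g (X w) - Y w) ^+ 2)%:E)%E.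
  by apply: integral_ge0 => w _; rewrite lee_fin sqr_ge0.
rewrite /risk; move: I0 I1; case: (\int[P]_w _)%E => [r| |] //=; try by rewrite !lee_fin.
Qed.

Lemma emp_01 (R : realType) d (Omega : measurableType d) dT (T : measurableType dT)
  (Xs : nat -> Omega -> T) (Ys : nat -> Omega -> R) (n : nat) (g : T -> R) (w : Omega) :
  (forall i w, 0 <= Ys i w <= 1) -> (forall x, 0 <= g x <= 1) ->
  0 <= emp_risk Xs Ys n g w <= 1.
Proof.
move=> Y01 g01; rewrite /emp_risk.
have hs : 0 <= \sum_(i < n) (g (Xs i w) - Ys i w) ^+ 2 <= n%:R.
  apply/andP; split; first by apply: sumr_ge0 => i _; exact: sqr_ge0.
  apply: (@le_trans _ _ (\sum_(i < n) (1 : R))); last by rewrite sumr_const card_ord.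
  apply: ler_sum => i _; have := Y01 i w; have := g01 (Xs i w); nra.
case: n hs => [|n] hs; first by rewrite invr0 mul0r lexx ler01.
apply/andP; split; first by case/andP: hs => h1 _; rewrite mulr_ge0 // ?invr_ge0.
rewrite ler_pdivrMl ?ltr0Sn // mulr1; by case/andP: hs.
Qed.

Lemma measurable_lt_set (R : realType) d (Omega : measurableType d) (f : Omega -> R) (a : R) :
  measurable_fun setT f -> measurable [set w | a < f w].
Proof.
move=> mf; have := mf measurableT _ (measurable_itv `]a, +oo[).
rewrite setTI; congr measurable; apply/seteqP; split => w /=;
  by rewrite in_itv /= andbT.
Qed.
Lemma pen_arg_ge1 (R : realType) (M : nat -> R) (n j : nat) :
  (0 < j)%N -> (0 < n)%N -> 1 <= M j -> 1 <= 2 * Num.sqrt j%:R * M j * n%:R.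
Proof.
move=> j0 n0 M1.
have s1 : 1 <= Num.sqrt (j%:R : R).
  by rewrite -{1}sqrtr1 ler_sqrt // ler1n.
have n1 : 1 <= (n%:R : R) by rewrite ler1n.
have h1 : 1 <= 2 * Num.sqrt (j%:R : R) by nra.
have h2 : 1 <= 2 * Num.sqrt (j%:R : R) * M j by nra.
nra.
Qed.

Lemma pen_sq (R : realType) (M : nat -> R) (n j : nat) :
  (0 < j)%N -> (0 < n)%N -> 1 <= M j ->
  n%:R * penalty M n j ^+ 2 / 128 = j%:R * ln (2 * Num.sqrt j%:R * M j * n%:R).
Proof.
move=> j0 n0 M1; rewrite /penalty sqr_sqrtr; last first.
  apply: divr_ge0 => //; apply: mulr_ge0 => //.
  by apply: ln_ge0; apply: pen_arg_ge1.
have nn : (n%:R : R) != 0 by rewrite pnatr_eq0 -lt0n.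
by field.
Qed.

Lemma pen_ge0 (R : realType) (M : nat -> R) (n j : nat) : 0 <= penalty M n j.
Proof. exact: sqrtr_ge0. Qed.

Lemma key_bound (R : realType) (K eps : R) (M : nat -> R) (j n : nat) :
  0 < K -> 0 < eps -> 1 <= M j -> (0 < j)%N -> (0 < n)%N ->
  K * 2 ^+ j * Num.sqrt (j%:R) ^+ j * (M j / (eps + penalty M n j)) ^+ j
    * expR (- (n%:R * (eps + penalty M n j) ^+ 2) / 128)
  <= K * (eps * n%:R)^-1 ^+ j * expR (- (n%:R * eps ^+ 2) / 128).
Proof.
move=> K0 e0 M1 j0 n0.
set r := penalty M n j.
set a := 2 * Num.sqrt (j%:R : R) * M j * n%:R.
have r0 : 0 <= r by apply: pen_ge0.
have a1 : 1 <= a := @pen_arg_ge1 R M n j j0 n0 M1.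
have a0 : 0 < a by lra.
have hr := @pen_sq R M n j j0 n0 M1; rewrite -/r -/a in hr.
have s0 : 0 <= Num.sqrt (j%:R : R) := sqrtr_ge0 _.
have h1 : (M j / (eps + r)) ^+ j <= (M j / eps) ^+ j.
  apply: lerXn2r; rewrite ?nnegrE ?divr_ge0 //; try lra.
  apply: ler_wpM2l; first lra.
  rewrite lef_pV2 ?posrE; lra.
have h2 : expR (- (n%:R * (eps + r) ^+ 2) / 128)
          <= expR (- (n%:R * eps ^+ 2) / 128) * (a ^+ j)^-1.
  rewrite -[a in (a ^+ j)^-1](lnK a0) -expRM_natl -expRN -expRD ler_expR.
  rewrite -hr.
  have nn : (0 : R) <= n%:R by [].
  have ner : 0 <= n%:R * (eps * r) by rewrite !mulr_ge0 //; lra.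
  have -> : n%:R * (eps + r) ^+ 2 = n%:R * eps ^+ 2 + n%:R * r ^+ 2 + 2 * (n%:R * (eps * r)) by ring.
  lra.
apply: (@le_trans _ _ (K * 2 ^+ j * Num.sqrt (j%:R) ^+ j * (M j / eps) ^+ j
    * (expR (- (n%:R * eps ^+ 2) / 128) * (a ^+ j)^-1))).
  apply: ler_pM; rewrite ?expR_ge0 //.
    by rewrite !mulr_ge0 ?exprn_ge0 ?divr_ge0 //; lra.
  apply: ler_pM => //; first by rewrite !mulr_ge0 ?exprn_ge0 //; lra.
  by rewrite exprn_ge0 // divr_ge0 //; lra.
rewrite le_eqVlt; apply/orP; left; apply/eqP.
have nn : (n%:R : R) != 0 by rewrite pnatr_eq0 -lt0n.
have sn : Num.sqrt (j%:R : R) != 0 by rewrite sqrtr_eq0 -ltNge ltr0n.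
have mn : M j != 0 by apply/eqP; lra.
have en : eps != 0 by apply/eqP; lra.
have E : 2 ^+ j * Num.sqrt (j%:R : R) ^+ j * (M j / eps) ^+ j * (a ^+ j)^-1
   = (eps * n%:R)^-1 ^+ j.
  rewrite -exprVn -!exprMn; congr (_ ^+ _).
  rewrite /a; field.
  by rewrite nn en mn sn.
rewrite -E; ring.
Qed.
Lemma nneseries_geo_le (R : realType) (u : nat -> \bar R) (C q : R) :
  0 < q < 1 -> 0 <= C -> (forall n, (0 <= u n <= (C * q ^+ n)%:E)%E) ->
  (\sum_(n <oo) u n <= (C * (1 - q)^-1)%:E)%E.
Proof.
move=> /andP[q0 q1] C0 hu.
apply: lime_le; first by apply: is_cvg_nneseries => n _; case/andP: (hu n).
apply: nearW => n /=.
apply: (@le_trans _ _ (\sum_(0 <= k < n) (C * q ^+ k)%:E)%E).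
  by apply: lee_sum => k _; case/andP: (hu k).
rewrite sumEFin lee_fin.
have nq : `|q| < 1 by rewrite ger0_norm ?ltW.
have := @geometric_le_lim R n C q C0 q0 nq.
by rewrite /series /=.
Qed.

Lemma dev_facts (R : realType) d (Omega : measurableType d) dT (T : measurableType dT)
  (P : probability Omega R) (X : Omega -> T) (Y : Omega -> R)
  (Xs : nat -> Omega -> T) (Ys : nat -> Omega -> R) (Gj : set (T -> R)) n w :
  measurable_fun setT (fun w => (X w, Y w)) -> (forall w, 0 <= Y w <= 1) ->
  (forall i w, 0 <= Ys i w <= 1) ->
  (forall g, Gj g -> measurable_fun setT g /\ forall x, 0 <= g x <= 1) ->
  (forall g, Gj g -> `|risk P X Y g - emp_risk Xs Ys n g w|
      <= sup [set `|risk P X Y g - emp_risk Xs Ys n g w| | g in Gj])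
  /\ sup [set `|risk P X Y g - emp_risk Xs Ys n g w| | g in Gj] <= 1.
Proof.
move=> mXY Y01 Ys01 HG.
set S := [set `|risk P X Y g - emp_risk Xs Ys n g w| | g in Gj].
have ub : forall g, Gj g -> `|risk P X Y g - emp_risk Xs Ys n g w| <= 1.
  move=> g Gg; have [mg g01] := HG g Gg.
  have r0 := risk_ge0 _ _ _ _ _ P X Y g.
  have r1 := risk_le1 _ _ _ _ _ P X Y g mXY Y01 mg g01.
  have /andP[e0 e1] := emp_01 _ _ _ _ _ Xs Ys n g w Ys01 g01.
  rewrite ler_norml; apply/andP; split; lra.
have ubS : ubound S 1 by move=> _ [g Gg <-]; exact: ub.
split.
  move=> g Gg; have hS : has_ubound S by exists 1.
  by apply: (ub_le_sup hS); exists g.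
case: (pselect (S !=set0)) => ne; first exact: ge_sup.
have -> : S = set0.
  by apply/seteqP; split => // x Sx; exfalso; apply: ne; exists x.
by rewrite sup0.
Qed.
Theorem mainTheorem3 (R : realType) (d : measure_display) (Omega : measurableType d)
  (dT : measure_display) (T : measurableType dT)
  (P : probability Omega R)
  (X : Omega -> T) (Y : Omega -> R)
  (Xs : nat -> Omega -> T) (Ys : nat -> Omega -> R)
  (G : nat -> set (T -> R)) (K : R) (M : nat -> R)
  (ghat : nat -> nat -> Omega -> (T -> R)) (J : nat -> Omega -> nat) :
  measurable_fun setT (fun w => (X w, Y w)) ->
  (forall w, 0 <= Y w <= 1) ->
  (forall i w, 0 <= Ys i w <= 1) ->
  iid_sample P X Y Xs Ys ->
  (forall (j : nat) g, (0 < j)%N -> G j g -> measurable_fun setT g /\ forall x, 0 <= g x <= 1) ->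
  (forall (j n : nat), (0 < j)%N -> measurable_fun setT
     (fun w => sup [set `|risk P X Y g - emp_risk Xs Ys n g w| | g in G j])) ->
  0 < K ->
  (forall j : nat, (0 < j)%N -> 1 <= M j) ->
  (forall (j n : nat) (eps : R), (0 < j)%N -> (0 < n)%N -> 0 < eps < 1 ->
     (P [set w | (eps < sup [set `|risk P X Y g - emp_risk Xs Ys n g w| | g in G j])%R]
     <= (K * 2 ^+ j * Num.sqrt (j%:R) ^+ j * (M j / eps) ^+ j
           * expR (- (n%:R * eps ^+ 2) / 128))%:E)%E) ->
  (forall (n j : nat) w, (0 < n)%N -> (0 < j)%N ->
     G j (ghat n j w) /\
     forall g, G j g -> emp_risk Xs Ys n (ghat n j w) w <= emp_risk Xs Ys n g w) ->
  (forall (n : nat) w, (0 < n)%N -> (0 < J n w)%N /\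
     forall j : nat, (0 < j)%N ->
       emp_risk Xs Ys n (ghat n (J n w) w) w + penalty M n (J n w)
       <= emp_risk Xs Ys n (ghat n j w) w + penalty M n j) ->
  inf [set inf [set risk P X Y g | g in G j] | j in [set j : nat | (0 < j)%N]]
    = bayes_risk P X Y ->
  ({ae P, forall w : Omega, risk P X Y (ghat n (J n w) w) @[n --> \oo] --> bayes_risk P X Y}).
Proof.
move=> mXY Y01 Ys01 iid HG Hmeas K0 HM Hdev Hghat HJ Hinf.
set L := bayes_risk P X Y.
pose Dv j n w := sup [set `|risk P X Y g - emp_risk Xs Ys n g w| | g in G j].
have HD : forall j n w, (0 < j)%N ->
    (forall g, G j g -> `|risk P X Y g - emp_risk Xs Ys n g w| <= Dv j n w)
    /\ Dv j n w <= 1.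
  move=> j n w j0; apply: dev_facts => //; move=> g; exact: HG.
hnf.
case: (pselect (exists w : Omega, True)) => [[w0 _]|nO]; last first.
  exists set0; split => //.
  by move=> w _; apply: nO; exists w.
pose eps (k : nat) : R := (k.+2%:R)^-1.
have e0 : forall k, 0 < eps k by move=> k; rewrite /eps invr_gt0 ltr0n.
have e1 : forall k, eps k < 1.
  by move=> k; rewrite /eps invf_lt1 ?ltr0n // ltr1n.
have Gne : forall j, (0 < j)%N -> G j (ghat 1 j w0).
  by move=> j j0; exact: (Hghat 1%N j w0 isT j0).1.
have Tinf : forall j, (0 < j)%N -> has_inf [set risk P X Y g | g in G j].
  move=> j j0; split; first by exists (risk P X Y (ghat 1 j w0)); exists (ghat 1 j w0) => //; exact: Gne.
  by exists 0 => _ [g _ <-]; exact: risk_ge0.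
have Sinf : has_inf [set inf [set risk P X Y g | g in G j] | j in [set j : nat | (0 < j)%N]].
  split; first by exists (inf [set risk P X Y g | g in G 1%N]); exists 1%N.
  exists 0 => _ [j j0 <-]; apply: lb_le_inf; first exact: (Tinf j j0).1.
  by move=> _ [g _ <-]; exact: risk_ge0.
have Hchoose : forall k, exists p : nat * (T -> R),
    [/\ (0 < p.1)%N, G p.1 p.2 & risk P X Y p.2 <= L + 2 * eps k].
  move=> k.
  have [s [j j0 <-] hs] := inf_adherent (e0 k) Sinf.
  have [t [g Gg <-] ht] := inf_adherent (e0 k) (Tinf j j0).
  exists (j, g); split => //=.
  rewrite /L -Hinf; lra.
have [pk Hpk] := choice Hchoose.
pose jk k := (pk k).1.
pose gk k := (pk k).2.
have jk0 : forall k, (0 < jk k)%N by move=> k; case: (Hpk k).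
pose E k n j := if (0 < j)%N then [set w | eps k + penalty M n j < Dv j n w]
                else set0.
pose A k n := \bigcup_j E k n j.
pose F1 k n := if (2 * k.+2 <= n)%N then A k n else set0.
pose F2 k n := if (0 < n)%N then [set w | eps k < Dv (jk k) n w] else set0.
have mE : forall k n j, measurable (E k n j).
  move=> k n j; rewrite /E; case: ifP => j0 //.
  exact: measurable_lt_set (Hmeas j n j0).
have mA : forall k n, measurable (A k n).
  by move=> k n; apply: bigcup_measurable => j _; exact: mE.
have mF1 : forall k n, measurable (F1 k n).
  by move=> k n; rewrite /F1; case: ifP.
have mF2 : forall k n, measurable (F2 k n).
  move=> k n; rewrite /F2; case: ifP => // n0.
  exact: measurable_lt_set (Hmeas _ n (jk0 k)).
pose q k := expR (- (eps k ^+ 2) / 128).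
have q0 : forall k, 0 < q k by move=> k; exact: expR_gt0.
have q1 : forall k, q k < 1.
  move=> k; rewrite /q expR_lt1.
  have := e0 k => h; have : 0 < eps k ^+ 2 by rewrite exprn_gt0.
  lra.
have expq : forall k n, expR (- (n%:R * eps k ^+ 2) / 128) = q k ^+ n.
  by move=> k n; rewrite /q -expRM_natl; congr (expR _); ring.
have PE : forall k n j, (2 * k.+2 <= n)%N ->
    (P (E k n j) <= ((K * q k ^+ n) * (2^-1) ^+ j)%:E)%E.
  move=> k n j hn.
  have n0 : (0 < n)%N by apply: leq_trans hn; rewrite muln_gt0.
  have Cge0 : 0 <= (K * q k ^+ n) * (2^-1) ^+ j.
    by rewrite !mulr_ge0 ?exprn_ge0 ?ltW ?q0 // invr_ge0.
  rewrite /E; case: ifP => j0; last by rewrite measure0 lee_fin.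
  set r := penalty M n j.
  have r0 : 0 <= r by apply: pen_ge0.
  case: (ltP (eps k + r) 1) => er.
    have er' : 0 < eps k + r < 1 by apply/andP; split => //; have := e0 k; lra.
    apply: le_trans (Hdev j n (eps k + r) j0 n0 er') _.
    rewrite lee_fin.
    apply: le_trans (key_bound _ _ _ _ _ _ K0 (e0 k) (HM j j0) j0 n0) _.
    rewrite expq [K * q k ^+ n * _]mulrAC.
    apply: ler_wpM2r; first by rewrite exprn_ge0 // ltW.
    apply: ler_wpM2l; first exact: ltW.
    have en : 0 < eps k * n%:R by rewrite mulr_gt0 ?e0 ?ltr0n.
    apply: lerXn2r; [by rewrite nnegrE invr_ge0 ltW|by rewrite nnegrE invr_ge0|].
    rewrite lef_pV2 ?posrE ?ltr0n //.
    rewrite /eps mulrC -[_ * _^-1]/(n%:R / k.+2%:R) ler_pdivlMr ?ltr0n //.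
    by rewrite -natrM ler_nat.
  have -> : [set w | eps k + r < Dv j n w] = set0.
    apply/seteqP; split => // w /= h.
    have := (HD j n w j0).2; lra.
  by rewrite measure0 lee_fin.
have PA : forall k n, (2 * k.+2 <= n)%N -> (P (A k n) <= (2 * K * q k ^+ n)%:E)%E.
  move=> k n hn.
  apply: (le_trans (@measure_sigma_subadditive _ _ _ P (A k n) (E k n) (mE k n) (mA k n) (fun _ h => h))).
  have hq : 0 < (2^-1 : R) < 1.
    by apply/andP; split; lra.
  have C0 : 0 <= K * q k ^+ n by rewrite mulr_ge0 ?exprn_ge0 ?ltW ?q0.
  apply: (le_trans (nneseries_geo_le _ _ _ _ hq C0 _)).
    by move=> j; rewrite measure_ge0 /=; exact: PE.
  rewrite lee_fin le_eqVlt; apply/orP; left; apply/eqP.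
  have -> : (1 - 2^-1 : R)^-1 = 2.
    have h2 : (1 - 2^-1 : R) = 2^-1 by field.
    by rewrite h2 invrK.
  ring.
have PF1 : forall k n, (P (F1 k n) <= (2 * K * q k ^+ n)%:E)%E.
  move=> k n; rewrite /F1; case: ifP => hn; first exact: PA.
  by rewrite measure0 lee_fin !mulr_ge0 ?exprn_ge0 ?ltW ?q0.
have N1 : forall k, P (lim_sup_set (F1 k)) = 0.
  move=> k; apply: lim_sup_set_cvg0 => //.
  have C0 : 0 <= 2 * K by rewrite mulr_ge0 // ltW.
  have hq : 0 < q k < 1 by rewrite q0 q1.
  apply: (le_lt_trans (nneseries_geo_le _ _ _ _ hq C0 _)); last exact: ltry.
  by move=> n; rewrite measure_ge0 /=; exact: PF1.
pose Ck k := K * 2 ^+ jk k * Num.sqrt ((jk k)%:R) ^+ jk k * (M (jk k) / eps k) ^+ jk k.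
have Ck0 : forall k, 0 <= Ck k.
  move=> k; have := HM _ (jk0 k) => hM.
  rewrite /Ck !mulr_ge0 ?exprn_ge0 ?sqrtr_ge0 ?divr_ge0 ?ltW ?e0 //; lra.
have PF2 : forall k n, (P (F2 k n) <= (Ck k * q k ^+ n)%:E)%E.
  move=> k n; rewrite /F2; case: ifP => n0; last first.
    by rewrite measure0 lee_fin mulr_ge0 // exprn_ge0 // ltW.
  have ek : 0 < eps k < 1 by rewrite e0 e1.
  have := Hdev (jk k) n (eps k) (jk0 k) n0 ek.
  by rewrite expq.
have N2 : forall k, P (lim_sup_set (F2 k)) = 0.
  move=> k; apply: lim_sup_set_cvg0 => //.
  have hq : 0 < q k < 1 by rewrite q0 q1.
  apply: (le_lt_trans (nneseries_geo_le _ _ _ _ hq (Ck0 k) _)); last exact: ltry.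
  by move=> n; rewrite measure_ge0 /=; exact: PF2.
have mlim : forall F : (set Omega)^nat, (forall n, measurable (F n)) ->
    measurable (lim_sup_set F).
  move=> F mF; apply: bigcapT_measurable => n.
  by apply: bigcup_measurable => j _; exact: mF.
have ev : forall F : (set Omega)^nat, forall w, ~ lim_sup_set F w ->
    exists a, forall n, (a <= n)%N -> ~ F n w.
  move=> F w nF.
  have [a ha] : exists a, ~ (\bigcup_(j in [set j | (a <= j)%N]) F j) w.
    by apply/existsNP => h; apply: nF => a _; exact: h a.
  by exists a => n an Fn; apply: ha; exists n.
suff good : forall w, ~ (\bigcup_k (lim_sup_set (F1 k) `|` lim_sup_set (F2 k))) w ->
    risk P X Y (ghat n (J n w) w) @[n --> \oo] --> L.
  apply: (negligibleS (A := \bigcup_k (lim_sup_set (F1 k) `|` lim_sup_set (F2 k)))).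
    move=> w /= nQ; apply: contrapT => nN; exact: nQ (good w nN).
  apply: negligible_bigcup => k; apply: negligibleU.
    by apply/(negligibleP _ (mlim _ (mF1 k))); exact: N1.
  by apply/(negligibleP _ (mlim _ (mF2 k))); exact: N2.
move=> w nN.
have hk : forall k, exists a, forall n, (a <= n)%N -> ~ F1 k n w /\ ~ F2 k n w.
  move=> k.
  have [a ha] := ev (F1 k) w (fun h => nN (ex_intro2 _ _ k I (or_introl h))).
  have [b hb] := ev (F2 k) w (fun h => nN (ex_intro2 _ _ k I (or_intror h))).
  exists (maxn a b) => n hn; split.
    by apply: ha; apply: leq_trans hn; exact: leq_maxl.
  by apply: hb; apply: leq_trans hn; exact: leq_maxr.
have Lb : forall n, (0 < n)%N -> L <= risk P X Y (ghat n (J n w) w).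
  move=> n n0; have [J0 _] := HJ n w n0.
  have [GJ _] := Hghat n (J n w) w n0 J0.
  rewrite /L /bayes_risk.
  have hl : has_lbound [set risk P X Y g | g in
        [set g : T -> R | measurable_fun setT g /\ forall x, 0 <= g x <= 1]].
    by exists 0 => _ [g _ <-]; exact: risk_ge0.
  apply: (ge_inf hl); exists (ghat n (J n w) w) => //.
  exact: HG GJ.
apply/cvgrPdist_le => e e_gt0.
have [k hk5] : exists k, 5 * eps k <= e.
  have h0 : 0 <= 5 / e by rewrite divr_ge0 // ltW.
  exists (Num.Def.archi_bound (5 / e)).
  have := archi_boundP h0; set m := Num.Def.archi_bound _ => hm.
  rewrite /eps -/m.
  have m2 : 5 / e <= m.+2%:R.
    by apply: (le_trans (ltW hm)); rewrite ler_nat; exact: leq_trans (leqnSn m) (leqnSn _).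
  rewrite -[5 * _]/(5 / m.+2%:R) ler_pdivrMr ?ltr0n //.
  by move: m2; rewrite ler_pdivrMr // mulrC.
have [a ha] := hk k.
have [b hb] := pen_small _ M (jk k) (eps k) (jk0 k) (HM _ (jk0 k)) (e0 k).
exists (maxn (maxn a b) (2 * k.+2)) => // n /= hn.
have han : (a <= n)%N by apply: leq_trans hn; rewrite leq_max leq_max leqnn.
have hbn : (b <= n)%N by apply: leq_trans hn; rewrite leq_max leq_max leqnn orbT.
have h2n : (2 * k.+2 <= n)%N by apply: leq_trans hn; rewrite leq_max leqnn orbT.
have n0 : (0 < n)%N by apply: leq_trans h2n; rewrite muln_gt0.
have [nF1 nF2] := ha n han.
have rk := hb n hbn.
have [J0 HJm] := HJ n w n0.
set jn := J n w in J0 HJm *.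
have [GJ _] := Hghat n jn w n0 J0.
have [_ Gk Rk] := Hpk k.
rewrite -/(jk k) -/(gk k) in Gk Rk.
have [_ Hmin] := Hghat n (jk k) w n0 (jk0 k).
have D1 : Dv jn n w <= eps k + penalty M n jn.
  rewrite leNgt; apply/negP => h; apply: nF1.
  rewrite /F1 h2n; exists jn => //; rewrite /E J0; exact: h.
have D2 : Dv (jk k) n w <= eps k.
  rewrite leNgt; apply/negP => h; apply: nF2.
  by rewrite /F2 n0.
have U1 := (HD jn n w J0).1 _ GJ.
have U2 := (HD (jk k) n w (jk0 k)).1 _ Gk.
move: U1 U2; rewrite !ler_norml => /andP[_ U1] /andP[U2 _].
have M1 := HJm (jk k) (jk0 k).
have M2 := Hmin (gk k) Gk.
have Lbn := Lb n n0.
have e0k := e0 k.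
apply/andP; split; lra.
Qed.
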